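(* Let $b\in\mathbb R$, $\omega>0$, $\mathcal B>0$, $t\ge0$, and let $\varphi(t,x,y,\eta)$ be the phase function described in the context. Then the set of solutions $(x,y,\eta)$ (with $y\ne0$, $y\wedge\eta\ne b$) of the equation $\varphi_\eta(t,x,y,\eta)=0$ is contained in the set $$\Big\{(x,y,\eta):\ x\wedge y=-\frac{\sin(\omega t)}{\omega}\,(y\wedge\eta-b)\Big\}.$$
   Context: $A(x)=\big(-b\,x_2/|x|^2,\ b\,x_1/|x|^2\big)$ for $x\ne0$; $u\wedge v=u_1v_2-u_2v_1$. The Hamiltonian is $h(x,\xi)=\frac12|\xi-A(x)|^2+\frac{\omega^2}{2}|x|^2$; for $y\ne0$, $y\wedge\eta\neq b$, $(x^t,\xi^t)=(x^t(y,\eta),\xi^t(y,\eta))$ solves $\dot x^t=\xi^t-A(x^t)$, $\dot\xi^t=-h_x(x^t,\xi^t)$, $x^0=y$, $\xi^0=\eta$. The action is $S(t,y,\eta)=\int_0^t\big(h_\xi(x^s,\xi^s)\cdot\xi^s-h(x^s,\xi^s)\big)ds$, and $\varphi(t,x,y,\eta)=S(t,y,\eta)+(x-x^t)\cdot\xi^t+i\mathcal B|x-x^t|^2/2$. $\varphi_\eta$ is the gradient in $\eta$. *)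

(* Defs.v *)
From Stdlib Require Import Reals.
From Coquelicot Require Import Coquelicot.
Open Scope R_scope.

Definition wedge (u v : R * R) : R := fst u * snd v - snd u * fst v.
Definition dot (u v : R * R) : R := fst u * fst v + snd u * snd v.
Definition nrm2 (u : R * R) : R := dot u u.

Definition Apot (b : R) (x : R * R) : R * R :=
  (- b * snd x / nrm2 x, b * fst x / nrm2 x).

Definition vsub (u v : R * R) : R * R := (fst u - fst v, snd u - snd v).

Definition ham (b w : R) (x xi : R * R) : R :=
  nrm2 (vsub xi (Apot b x)) / 2 + w ^ 2 * nrm2 x / 2.

(* partial derivatives, written literally as derivatives of h in each
   coordinate; h is smooth on x <> 0, where these are the true partials *)
Definition ham_x (b w : R) (x xi : R * R) : R * R :=
  (Derive (fun u => ham b w (u, snd x) xi) (fst x),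
   Derive (fun u => ham b w (fst x, u) xi) (snd x)).
Definition ham_xi (b w : R) (x xi : R * R) : R * R :=
  (Derive (fun u => ham b w x (u, snd xi)) (fst xi),
   Derive (fun u => ham b w x (fst xi, u)) (snd xi)).

Definition admissible (b : R) (y eta : R * R) : Prop :=
  y <> (0, 0) /\ wedge y eta <> b.

(* [Fl s y eta = (x^s(y,eta), xi^s(y,eta))] is the Hamiltonian flow:
   for every admissible (y,eta) the curve s |-> Fl s y eta solves
   x' = xi - A(x), xi' = - h_x(x,xi) with x^0 = y, xi^0 = eta
   (for all real times; the trajectory stays away from the origin, where
   A is singular). This solution exists and is unique. *)
Definition is_ham_flow (b w : R)
    (Fl : R -> R * R -> R * R -> (R * R) * (R * R)) : Prop :=
  forall y eta, admissible b y eta ->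
    Fl 0 y eta = (y, eta) /\
    forall s,
      fst (Fl s y eta) <> (0, 0) /\
      (let X := fun r => fst (Fl r y eta) in
       let XI := fun r => snd (Fl r y eta) in
       let V := vsub (XI s) (Apot b (X s)) in
       let G := ham_x b w (X s) (XI s) in
       is_derive (fun r => fst (X r)) s (fst V) /\
       is_derive (fun r => snd (X r)) s (snd V) /\
       is_derive (fun r => fst (XI r)) s (- fst G) /\
       is_derive (fun r => snd (XI r)) s (- snd G)).

Definition action (b w : R) Fl (t : R) (y eta : R * R) : R :=
  RInt (fun s => let X := fst (Fl s y eta) in let XI := snd (Fl s y eta) in
                 dot (ham_xi b w X XI) XI - ham b w X XI) 0 t.

Definition phase (b w BB : R) Fl (t : R) (x y eta : R * R) : C :=
  let Xt := fst (Fl t y eta) in let XIt := snd (Fl t y eta) in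
  (action b w Fl t y eta + dot (vsub x Xt) XIt,
   BB * nrm2 (vsub x Xt) / 2).

Definition phase_eta_zero (b w BB : R) Fl (t : R) (x y eta : R * R) : Prop :=
  is_derive (K := R_AbsRing) (V := C_R_NormedModule)
    (fun u => phase b w BB Fl t x y (u, snd eta)) (fst eta) (0 : C) /\
  is_derive (K := R_AbsRing) (V := C_R_NormedModule)
    (fun u => phase b w BB Fl t x y (fst eta, u)) (snd eta) (0 : C).

(* Main.v *)
Require Import Defs.
From Stdlib Require Import Reals Lra Psatz.
From Coquelicot Require Import Coquelicot.
Open Scope R_scope.

Lemma const_of_zero_deriv (E : R -> R) :
  (forall s, is_derive E s 0) -> forall s, E s = E 0.
Proof.
intros H s.
destruct (Rtotal_order s 0) as [Hl|[He|Hg]].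
- apply (eq_is_derive E s 0); [intros; apply H | lra].
- subst; reflexivity.
- symmetry; apply (eq_is_derive E 0 s); [intros; apply H | lra].
Qed.

Lemma lin_ode_unique (w y1 y2 q1 q2 : R) (X1 X2 P1 P2 : R -> R) :
  0 < w ->
  (forall s, is_derive X1 s (P1 s)) -> (forall s, is_derive X2 s (P2 s)) ->
  (forall s, is_derive P1 s (- w^2 * X1 s)) -> (forall s, is_derive P2 s (- w^2 * X2 s)) ->
  X1 0 = y1 -> X2 0 = y2 -> P1 0 = q1 -> P2 0 = q2 ->
  forall s,
    X1 s = y1 * cos (w*s) + q1 * sin (w*s) / w /\
    X2 s = y2 * cos (w*s) + q2 * sin (w*s) / w /\
    P1 s = - w * y1 * sin (w*s) + q1 * cos (w*s) /\
    P2 s = - w * y2 * sin (w*s) + q2 * cos (w*s).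
Proof.
intros Hw dX1 dX2 dP1 dP2 i1 i2 i3 i4.
set (E := fun r => (P1 r - (- w * y1 * sin (w*r) + q1 * cos (w*r)))^2
   + (P2 r - (- w * y2 * sin (w*r) + q2 * cos (w*r)))^2
   + w^2 * ((X1 r - (y1 * cos (w*r) + q1 * sin (w*r) / w))^2
   + (X2 r - (y2 * cos (w*r) + q2 * sin (w*r) / w))^2)).
assert (HE : forall s, is_derive E s 0).
{ intros s. unfold E. auto_derive.
  - repeat split; eexists; eauto.
  - change (fun x => X1 x) with X1; change (fun x => X2 x) with X2; change (fun x => P1 x) with P1; change (fun x => P2 x) with P2.
    rewrite (is_derive_unique _ _ _ (dX1 s)), (is_derive_unique _ _ _ (dX2 s)),
            (is_derive_unique _ _ _ (dP1 s)), (is_derive_unique _ _ _ (dP2 s)).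
    field. lra. }
intros s.
assert (E0 : E 0 = 0).
{ unfold E. rewrite i1, i2, i3, i4. rewrite Rmult_0_r, sin_0, cos_0. field. lra. }
pose proof (const_of_zero_deriv E HE s) as Hs. rewrite E0 in Hs. unfold E in Hs.
set (a := P1 s - (- w * y1 * sin (w*s) + q1 * cos (w*s))) in Hs.
set (b := P2 s - (- w * y2 * sin (w*s) + q2 * cos (w*s))) in Hs.
set (c := X1 s - (y1 * cos (w*s) + q1 * sin (w*s) / w)) in Hs.
set (d := X2 s - (y2 * cos (w*s) + q2 * sin (w*s) / w)) in Hs.
assert (Hw2 : 0 < w^2) by nra.
assert (a = 0 /\ b = 0 /\ c = 0 /\ d = 0) as (Ha & Hb & Hc & Hd).
{ assert (0 <= a^2) by nra. assert (0 <= b^2) by nra.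
  assert (0 <= c^2) by nra. assert (0 <= d^2) by nra.
  assert (0 <= w^2 * c^2) by nra. assert (0 <= w^2*d^2) by nra.
  assert (a^2 = 0) by lra. assert (b^2 = 0) by lra.
  assert (w^2 * c^2 = 0) by lra. assert (w^2 * d^2 = 0) by lra.
  assert (c^2 = 0) by (apply (Rmult_eq_reg_l (w^2)); lra).
  assert (d^2 = 0) by (apply (Rmult_eq_reg_l (w^2)); lra).
  repeat split; nra. }
unfold a, b, c, d in *. repeat split; lra.
Qed.
Definition hx1 (b w : R) (x xi : R*R) : R :=
  let n := fst x * fst x + snd x * snd x in
  let P1 := fst xi + b * snd x / n in
  let P2 := snd xi - b * fst x / n in
  - (P1 * 2 * b * fst x * snd x / (n*n)) - P2 * b * (snd x * snd x - fst x * fst x) / (n*n) + w^2 * fst x.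
Definition hx2 (b w : R) (x xi : R*R) : R :=
  let n := fst x * fst x + snd x * snd x in
  let P1 := fst xi + b * snd x / n in
  let P2 := snd xi - b * fst x / n in
  P1 * b * (fst x * fst x - snd x * snd x) / (n*n) + P2 * 2 * b * fst x * snd x / (n*n) + w^2 * snd x.

Lemma ham_x_eq b w x xi : nrm2 x <> 0 -> ham_x b w x xi = (hx1 b w x xi, hx2 b w x xi).
Proof.
destruct x as [x1 x2], xi as [z1 z2]. unfold nrm2, dot; simpl. intros Hn.
unfold ham_x; simpl. f_equal; apply is_derive_unique; unfold ham, vsub, Apot, hx1, hx2; simpl; unfold nrm2, dot; simpl;
  auto_derive; try (repeat split; auto; fail); field; auto.
Qed.

Lemma ham_xi_eq b w x xi : ham_xi b w x xi = vsub xi (Apot b x).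
Proof.
destruct x as [x1 x2], xi as [z1 z2].
unfold ham_xi; apply injective_projections; simpl; apply is_derive_unique; unfold ham, vsub, Apot; simpl; unfold nrm2, dot; simpl;
  auto_derive; auto; unfold Rdiv; generalize (/ (x1*x1+x2*x2)); intros k; field.
Qed.
Lemma P_deriv b w (X1 X2 Z1 Z2 : R -> R) s :
  X1 s * X1 s + X2 s * X2 s <> 0 ->
  is_derive X1 s (Z1 s - (- b * X2 s / (X1 s * X1 s + X2 s * X2 s))) ->
  is_derive X2 s (Z2 s - b * X1 s / (X1 s * X1 s + X2 s * X2 s)) ->
  is_derive Z1 s (- hx1 b w (X1 s, X2 s) (Z1 s, Z2 s)) ->
  is_derive Z2 s (- hx2 b w (X1 s, X2 s) (Z1 s, Z2 s)) ->
  is_derive (fun r => Z1 r - (- b * X2 r / (X1 r * X1 r + X2 r * X2 r))) s (- w^2 * X1 s) /\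
  is_derive (fun r => Z2 r - b * X1 r / (X1 r * X1 r + X2 r * X2 r)) s (- w^2 * X2 s).
Proof.
intros Hn d1 d2 d3 d4.
split; auto_derive;
  try (repeat split; auto; eexists; eauto; fail);
  change (fun x => X1 x) with X1; change (fun x => X2 x) with X2;
  change (fun x => Z1 x) with Z1; change (fun x => Z2 x) with Z2;
  try rewrite (is_derive_unique _ _ _ d1); try rewrite (is_derive_unique _ _ _ d2);
  try rewrite (is_derive_unique _ _ _ d3); try rewrite (is_derive_unique _ _ _ d4);
  unfold hx1, hx2; simpl; field; auto.
Qed.

Lemma flow_explicit b w Fl y e : 0 < w -> is_ham_flow b w Fl -> admissible b y e -> forall s,
  fst (fst (Fl s y e)) = fst y * cos (w*s) + fst (vsub e (Apot b y)) * sin (w*s) / w /\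
  snd (fst (Fl s y e)) = snd y * cos (w*s) + snd (vsub e (Apot b y)) * sin (w*s) / w /\
  fst (vsub (snd (Fl s y e)) (Apot b (fst (Fl s y e)))) =
     - w * fst y * sin (w*s) + fst (vsub e (Apot b y)) * cos (w*s) /\
  snd (vsub (snd (Fl s y e)) (Apot b (fst (Fl s y e)))) =
     - w * snd y * sin (w*s) + snd (vsub e (Apot b y)) * cos (w*s).
Proof.
intros Hw HF Ha. destruct (HF y e Ha) as [H0 Hs].
set (X1 := fun r => fst (fst (Fl r y e))).
set (X2 := fun r => snd (fst (Fl r y e))).
set (Z1 := fun r => fst (snd (Fl r y e))).
set (Z2 := fun r => snd (snd (Fl r y e))).
assert (HD : forall s, X1 s * X1 s + X2 s * X2 s <> 0 /\
  is_derive X1 s (Z1 s - (- b * X2 s / (X1 s * X1 s + X2 s * X2 s))) /\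
  is_derive X2 s (Z2 s - b * X1 s / (X1 s * X1 s + X2 s * X2 s)) /\
  is_derive Z1 s (- hx1 b w (X1 s, X2 s) (Z1 s, Z2 s)) /\
  is_derive Z2 s (- hx2 b w (X1 s, X2 s) (Z1 s, Z2 s))).
{ intros s. destruct (Hs s) as [Hne [D1 [D2 [D3 D4]]]].
  assert (Hn : X1 s * X1 s + X2 s * X2 s <> 0).
  { unfold X1, X2. destruct (fst (Fl s y e)) as [u v]; simpl.
    intros H. apply Hne. assert (u = 0) by nra. assert (v = 0) by nra. subst; reflexivity. }
  assert (Hn' : nrm2 (fst (Fl s y e)) <> 0) by exact Hn.
  rewrite (ham_x_eq b w _ _ Hn') in D3, D4. simpl in D3, D4.
  split; [exact Hn|]. split; [exact D1|]. split; [exact D2|]. split; [exact D3|exact D4]. }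
intros s.
apply (lin_ode_unique w _ _ _ _ X1 X2
  (fun r => Z1 r - (- b * X2 r / (X1 r * X1 r + X2 r * X2 r)))
  (fun r => Z2 r - b * X1 r / (X1 r * X1 r + X2 r * X2 r))); auto.
- intros r; apply HD.
- intros r; apply HD.
- intros r; destruct (HD r) as [? [? [? [? ?]]]]. apply (P_deriv b w X1 X2 Z1 Z2 r); auto.
- intros r; destruct (HD r) as [? [? [? [? ?]]]]. apply (P_deriv b w X1 X2 Z1 Z2 r); auto.
- unfold X1; rewrite H0; reflexivity.
- unfold X2; rewrite H0; reflexivity.
- unfold X1, X2, Z1; rewrite H0; reflexivity.
- unfold X1, X2, Z2; rewrite H0; reflexivity.
Qed.
Definition Th (a b c d f : R) : R :=
  let p := (a+d)/2 in let q := (c-b)/2 in let r := (a-d)/2 in let u := (b+c)/2 in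
  let P := p*p+q*q in let A := p*r+q*u in let B := p*u-q*r in
  f + atan ((B * cos (2*f) - A * sin (2*f)) / (P + A * cos (2*f) + B * sin (2*f))).

Lemma Th_alg (P A B C S r u : R) :
  C*C+S*S = 1 -> A*A+B*B = P*(r*r+u*u) -> 0 < P - (r*r+u*u) ->
  P + A*C + B*S <> 0 ->
  1 + ((-2*B*S - 2*A*C) * (P + A*C + B*S) - (B*C - A*S) * (-2*A*S + 2*B*C))
       / ((P + A*C + B*S) * (P + A*C + B*S)) / (1 + ((B*C - A*S)/(P + A*C + B*S))²)
  = (P - (r*r+u*u)) / (P + r*r + u*u + 2*(A*C+B*S)).
Proof.
intros HK HAB Hdet HD.
set (D := P + A*C + B*S). set (N := B*C - A*S).
assert (HP : 0 < P) by nra.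
assert (E1 : D*D + N*N = P * (P + r*r + u*u + 2*(A*C+B*S))).
{ unfold D, N. transitivity (P*P + 2*P*(A*C+B*S) + (A*A+B*B)*(C*C+S*S)); [ring|].
  rewrite HK, HAB. ring. }
assert (E2 : (-2*B*S - 2*A*C) * D - N * (-2*A*S + 2*B*C) = -2*(P*(A*C+B*S) + (A*A+B*B)*(C*C+S*S))).
{ unfold D, N. ring. }
rewrite HK, HAB in E2. rewrite E2.
assert (HDN : D*D+N*N <> 0).
{ assert (0 < D*D) by (assert (D <> 0) by exact HD; nra). nra. }
assert (Hn : P + r*r + u*u + 2*(A*C+B*S) <> 0).
{ intro H0. apply HDN. rewrite E1, H0. ring. }
replace (1 + (N / D)²) with ((D*D+N*N)/(D*D)) by (unfold N, Rsqr; field; auto).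
rewrite E1. field. repeat split; auto; lra.
Qed.

Lemma inner_deriv (P A B f : R) : P + A * cos (2*f) + B * sin (2*f) <> 0 ->
  is_derive (fun f => (B * cos (2*f) - A * sin (2*f)) / (P + A * cos (2*f) + B * sin (2*f))) f
   (((-2*B*sin (2*f) - 2*A*cos (2*f)) * (P + A*cos (2*f) + B*sin (2*f))
      - (B*cos (2*f) - A*sin (2*f)) * (-2*A*sin (2*f) + 2*B*cos (2*f)))
     / ((P + A*cos (2*f) + B*sin (2*f)) * (P + A*cos (2*f) + B*sin (2*f)))).
Proof. intros H. auto_derive; [repeat split; auto|]. field. auto. Qed.

Lemma Th_deriv a b c d f : 0 < a*d - b*c ->
  is_derive (Th a b c d) f ((a*d-b*c)/((a*cos f + b*sin f)^2 + (c*cos f + d*sin f)^2)).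
Proof.
intros Hdet.
set (p := (a+d)/2). set (q := (c-b)/2). set (r := (a-d)/2). set (u := (b+c)/2).
set (P := p*p+q*q). set (A := p*r+q*u). set (B := p*u-q*r).
assert (HAB : A*A+B*B = P*(r*r+u*u)) by (unfold A, B, P; ring).
assert (Hd : P - (r*r+u*u) = a*d - b*c) by (unfold P, p, q, r, u; field).
assert (HK : cos (2*f) * cos (2*f) + sin (2*f) * sin (2*f) = 1)
  by (rewrite Rplus_comm; rewrite <- !Rsqr_def; apply sin2_cos2).
assert (HD : 0 < P + A * cos (2*f) + B * sin (2*f)).
{ set (C := cos (2*f)) in *. set (S := sin (2*f)) in *.
  assert (H1 : (A*C+B*S)*(A*C+B*S) <= A*A+B*B).
  { assert ((A*C+B*S)*(A*C+B*S) + (A*S-B*C)*(A*S-B*C) = (A*A+B*B)*(C*C+S*S)) by ring.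
    rewrite HK in H. pose proof (Rle_0_sqr (A*S-B*C)). unfold Rsqr in *. lra. }
  assert (HP : 0 < P) by nra.
  assert (H2 : A*A+B*B < P*P) by nra.
  nra. }
assert (Hin : is_derive (fun f => (B * cos (2*f) - A * sin (2*f)) / (P + A * cos (2*f) + B * sin (2*f))) f
   (((-2*B*sin (2*f) - 2*A*cos (2*f)) * (P + A*cos (2*f) + B*sin (2*f))
      - (B*cos (2*f) - A*sin (2*f)) * (-2*A*sin (2*f) + 2*B*cos (2*f)))
     / ((P + A*cos (2*f) + B*sin (2*f)) * (P + A*cos (2*f) + B*sin (2*f))))).
{ apply inner_deriv. lra. }
assert (Hth : is_derive (Th a b c d) f
   (1 + ((-2*B*sin (2*f) - 2*A*cos (2*f)) * (P + A*cos (2*f) + B*sin (2*f))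
      - (B*cos (2*f) - A*sin (2*f)) * (-2*A*sin (2*f) + 2*B*cos (2*f)))
     / ((P + A*cos (2*f) + B*sin (2*f)) * (P + A*cos (2*f) + B*sin (2*f)))
     / (1 + ((B*cos (2*f) - A*sin (2*f))/(P + A*cos (2*f) + B*sin (2*f)))²))).
{ pose proof (is_derive_comp atan _ f _ _ (is_derive_atan _) Hin) as H2.
  pose proof (is_derive_plus _ _ _ _ _ (is_derive_id f) H2) as H3.
  unfold Th. fold p q r u. fold P A B. exact H3. }
rewrite (Th_alg P A B (cos (2*f)) (sin (2*f)) r u) in Hth; auto; [| lra | lra].
rewrite <- Hd.
replace ((a * cos f + b * sin f) ^ 2 + (c * cos f + d * sin f) ^ 2)
  with (P + r*r + u*u + 2*(A*cos (2*f) + B*sin (2*f))); [exact Hth|].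
rewrite cos_2a, sin_2a.
assert (Hcs : cos f * cos f + sin f * sin f = 1).
{ rewrite Rplus_comm; rewrite <- !Rsqr_def; apply sin2_cos2. }
unfold P, A, B, p, q, r, u.
replace ((a * cos f + b * sin f) ^ 2 + (c * cos f + d * sin f) ^ 2) with
  ((a * cos f + b * sin f) ^ 2 + (c * cos f + d * sin f) ^ 2) by ring.
nra.
Qed.

Lemma Th_shift a b c d f : sin f = 0 -> Th a b c d f = f + Th a b c d 0.
Proof.
intros Hs.
assert (C1 : cos (2*f) = 1) by (rewrite cos_2a_sin, Hs; ring).
assert (S1 : sin (2*f) = 0) by (rewrite sin_2a, Hs; ring).
assert (C0 : cos (2*0) = 1) by (rewrite Rmult_0_r; apply cos_0).
assert (S0 : sin (2*0) = 0) by (rewrite Rmult_0_r; apply sin_0).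
unfold Th. rewrite C1, S1, C0, S0. ring.
Qed.

Definition Thg (a b c d f : R) : R :=
  if Rlt_dec 0 (a*d-b*c) then Th a b c d f else Th a (-b) c (-d) (-f).

Lemma Thg_deriv a b c d f : a*d - b*c <> 0 ->
  is_derive (Thg a b c d) f ((a*d-b*c)/((a*cos f + b*sin f)^2 + (c*cos f + d*sin f)^2)).
Proof.
intros Hd. unfold Thg. destruct (Rlt_dec 0 (a*d-b*c)) as [Hp|Hn].
- apply Th_deriv; auto.
- assert (Hp : 0 < a * (-d) - (-b) * c) by lra.
  assert (H' : is_derive (fun f : R => - f) f (-1)).
  { auto_derive; auto. }
  pose proof (is_derive_comp (Th a (-b) c (-d)) (fun f => - f) f _ (-1) (Th_deriv _ _ _ _ (-f) Hp) H') as H.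
  simpl in H.
  rewrite cos_neg, sin_neg in H.
  eapply is_derive_ext; [intros; reflexivity|].
  replace ((a * d - b * c) / ((a * cos f + b * sin f) ^ 2 + (c * cos f + d * sin f) ^ 2))
    with (scal (-1) ((a * - d - - b * c) / ((a * cos f + - b * - sin f) ^ 2 + (c * cos f + - d * - sin f) ^ 2))).
  exact H.
  unfold scal; simpl; unfold mult; simpl.
  assert (E: (a * cos f + - b * - sin f) * ((a * cos f + - b * - sin f) * 1) + (c * cos f + - d * - sin f) * ((c * cos f + - d * - sin f) * 1) = (a * cos f + b * sin f) * ((a * cos f + b * sin f) * 1) + (c * cos f + d * sin f) * ((c * cos f + d * sin f) * 1)) by ring.
  rewrite E. unfold Rdiv. ring.
Qed.

Lemma Thg_shift a b c d f : sin f = 0 -> 0 < a*d - b*c -> Thg a b c d f - Thg a b c d 0 = f.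
Proof.
intros Hs Hp. unfold Thg. destruct (Rlt_dec 0 (a*d-b*c)); [|lra].
rewrite Th_shift; auto. ring.
Qed.

Lemma Thg_shift' a b c d f : sin f = 0 -> a*d - b*c < 0 -> Thg a b c d f - Thg a b c d 0 = - f.
Proof.
intros Hs Hp. unfold Thg. destruct (Rlt_dec 0 (a*d-b*c)); [lra|].
rewrite Ropp_0. rewrite (Th_shift _ _ _ _ (-f)); [ring|]. rewrite sin_neg, Hs. ring.
Qed.

Lemma nM_ne0 a b c d f : a*d - b*c <> 0 -> (a*cos f + b*sin f)^2 + (c*cos f + d*sin f)^2 <> 0.
Proof.
intros Hd H.
assert (H1 : a*cos f + b*sin f = 0).
{ pose proof (Rle_0_sqr (a*cos f + b*sin f)). pose proof (Rle_0_sqr (c*cos f + d*sin f)).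
  unfold Rsqr in *. simpl in H. assert (Hz : (a*cos f + b*sin f) * (a*cos f + b*sin f) = 0) by lra.
  apply Rmult_integral in Hz; tauto. }
assert (H2 : c*cos f + d*sin f = 0).
{ pose proof (Rle_0_sqr (a*cos f + b*sin f)). pose proof (Rle_0_sqr (c*cos f + d*sin f)).
  unfold Rsqr in *. simpl in H. assert (Hz : (c*cos f + d*sin f) * (c*cos f + d*sin f) = 0) by lra.
  apply Rmult_integral in Hz; tauto. }
assert (Hc : (a*d-b*c) * cos f = 0) by (replace ((a*d-b*c) * cos f) with (d*(a*cos f + b*sin f) - b*(c*cos f + d*sin f)) by ring; rewrite H1, H2; ring).
assert (Hs : (a*d-b*c) * sin f = 0) by (replace ((a*d-b*c) * sin f) with (a*(c*cos f + d*sin f) - c*(a*cos f + b*sin f)) by ring; rewrite H1, H2; ring).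
apply Rmult_integral in Hc. apply Rmult_integral in Hs.
destruct Hc as [Hc|Hc]; [tauto|]. destruct Hs as [Hs|Hs]; [tauto|].
pose proof (sin2_cos2 f). rewrite Hc, Hs in H0. unfold Rsqr in H0. lra.
Qed.

Definition Xe (w y1 q1 s : R) := y1 * cos (w*s) + q1 * sin (w*s) / w.
Definition Pe (w y1 q1 s : R) := - w * y1 * sin (w*s) + q1 * cos (w*s).
Definition gint (b w y1 y2 q1 q2 L s : R) :=
  (Pe w y1 q1 s ^2 + Pe w y2 q2 s ^2)/2 - w^2 * (Xe w y1 q1 s ^2 + Xe w y2 q2 s^2)/2
  + b * L / (Xe w y1 q1 s ^2 + Xe w y2 q2 s ^2).
Definition Hint (b w y1 y2 q1 q2 s : R) :=
  (Xe w y1 q1 s * Pe w y1 q1 s + Xe w y2 q2 s * Pe w y2 q2 s)/2 + b * Thg y1 (q1/w) y2 (q2/w) (w*s).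

Lemma Xe_nM w y1 y2 q1 q2 s : 0 < w ->
  Xe w y1 q1 s ^2 + Xe w y2 q2 s ^2 =
  (y1 * cos (w*s) + q1/w * sin (w*s))^2 + (y2 * cos (w*s) + q2/w * sin (w*s))^2.
Proof. intros Hw. unfold Xe. field. lra. Qed.

Lemma Xe_ne0 w y1 y2 q1 q2 s : 0 < w -> y1 * q2 - y2 * q1 <> 0 ->
  Xe w y1 q1 s ^2 + Xe w y2 q2 s ^2 <> 0.
Proof.
intros Hw HL. rewrite Xe_nM; auto. apply nM_ne0.
intro H. apply HL. replace (y1 * q2 - y2 * q1) with (w * (y1 * (q2/w) - q1/w * y2)) by (field; lra).
rewrite H; ring.
Qed.

Lemma gint_cont b w y1 y2 q1 q2 L s : 0 < w -> y1 * q2 - y2 * q1 <> 0 ->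
  continuous (gint b w y1 y2 q1 q2 L) s.
Proof.
intros Hw HL. pose proof (Xe_ne0 w y1 y2 q1 q2 s Hw HL) as Hn.
apply (ex_derive_continuous (K:=R_AbsRing) (V:=R_NormedModule)). unfold gint, Xe, Pe in *. auto_derive.
repeat split; auto; intro H; apply Hn; rewrite <- H; ring.
Qed.

Lemma Hint_deriv b w y1 y2 q1 q2 L s : 0 < w -> L = y1 * q2 - y2 * q1 -> L <> 0 ->
  is_derive (Hint b w y1 y2 q1 q2) s (gint b w y1 y2 q1 q2 L s).
Proof.
intros Hw HLq HL.
assert (Hd : y1 * (q2/w) - q1/w * y2 <> 0).
{ intro H. apply HL. rewrite HLq. replace (y1 * q2 - y2 * q1) with (w * (y1 * (q2/w) - q1/w * y2)) by (field; lra).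
  rewrite H; ring. }
assert (HK : is_derive (fun s => (Xe w y1 q1 s * Pe w y1 q1 s + Xe w y2 q2 s * Pe w y2 q2 s)/2) s
   ((Pe w y1 q1 s ^2 + Pe w y2 q2 s ^2)/2 - w^2 * (Xe w y1 q1 s ^2 + Xe w y2 q2 s^2)/2)).
{ unfold Xe, Pe. auto_derive; auto. field. lra. }
assert (Hw' : is_derive (fun s : R => w * s) s w).
{ auto_derive; auto. ring. }
pose proof (is_derive_comp (Thg y1 (q1/w) y2 (q2/w)) (fun s => w * s) s _ w (Thg_deriv _ _ _ _ (w*s) Hd) Hw') as HT.
pose proof (is_derive_scal _ _ b _ HT) as HT'.
pose proof (is_derive_plus _ _ _ _ _ HK HT') as H.
unfold Hint. eapply is_derive_ext; [intros; reflexivity|].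
replace (gint b w y1 y2 q1 q2 L s) with
  (plus ((Pe w y1 q1 s ^2 + Pe w y2 q2 s ^2)/2 - w^2 * (Xe w y1 q1 s ^2 + Xe w y2 q2 s^2)/2)
        (b * scal w ((y1 * (q2 / w) - q1 / w * y2) /
          ((y1 * cos (w * s) + q1 / w * sin (w * s)) ^ 2 + (y2 * cos (w * s) + q2 / w * sin (w * s)) ^ 2)))).
exact H.
unfold gint. rewrite <- (Xe_nM w y1 y2 q1 q2 s Hw).
pose proof (Xe_ne0 w y1 y2 q1 q2 s Hw) as Hn.
unfold plus, scal; simpl; unfold mult; simpl. rewrite HLq. field.
split; [|lra]. intro Hz. apply Hn; [rewrite <- HLq; exact HL| rewrite <- Hz; ring].
Qed.

Lemma KX w y q th : 0 < w -> sin th = 0 ->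
  (y * cos th + q * sin th / w) * (- w * y * sin th + q * cos th) = y * q.
Proof.
intros Hw Hs. rewrite Hs.
assert (Ct : cos th * cos th = 1) by (pose proof (sin2_cos2 th) as H; rewrite Hs in H; unfold Rsqr in H; lra).
replace ((y * cos th + q * 0 / w) * (- w * y * 0 + q * cos th)) with (y*q*(cos th * cos th)) by (field; lra).
rewrite Ct; ring.
Qed.

Lemma action_val b w Fl t y e : 0 < w -> is_ham_flow b w Fl -> admissible b y e -> sin (w*t) = 0 ->
  action b w Fl t y e = b * (w*t) * (if Rlt_dec 0 (wedge y e - b) then 1 else -1).
Proof.
intros Hw HF Ha Hst.
pose proof (flow_explicit b w Fl y e Hw HF Ha) as HFe.
destruct y as [y1 y2], e as [e1 e2].
pose proof Ha as [Hy0 HLb].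
assert (Hn : y1*y1+y2*y2 <> 0).
{ intros H. apply Hy0. assert (y1 = 0) by nra. assert (y2 = 0) by nra. subst; reflexivity. }
set (q1 := fst (vsub (e1,e2) (Apot b (y1,y2)))) in HFe.
set (q2 := snd (vsub (e1,e2) (Apot b (y1,y2)))) in HFe.
assert (HLq : wedge (y1,y2) (e1,e2) - b = y1*q2 - y2*q1).
{ unfold q1, q2, wedge, vsub, Apot, nrm2, dot; simpl; field; auto. }
clearbody q1 q2.
set (L := wedge (y1,y2) (e1,e2) - b) in *.
assert (HL0 : L <> 0) by (unfold L; lra). clearbody L.
assert (HL1 : y1 * q2 - y2 * q1 <> 0) by (rewrite <- HLq; exact HL0).
unfold action.
rewrite (RInt_ext _ (gint b w y1 y2 q1 q2 L)).
2:{ intros s _. specialize (HFe s). destruct HFe as (E1 & E2 & E3 & E4).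
  rewrite ham_xi_eq.
  remember (Fl s (y1, y2) (e1, e2)) as F eqn:HeqF. clear HeqF.
  destruct F as [[x1 x2] [z1 z2]].
  unfold vsub, Apot, nrm2, dot in *; simpl in *.
  subst x1 x2.
  assert (Hz1 : z1 = - w * y1 * sin (w * s) + q1 * cos (w * s) + - b * (y2 * cos (w * s) + q2 * sin (w * s) / w) /
           ((y1 * cos (w * s) + q1 * sin (w * s) / w) * (y1 * cos (w * s) + q1 * sin (w * s) / w) +
            (y2 * cos (w * s) + q2 * sin (w * s) / w) * (y2 * cos (w * s) + q2 * sin (w * s) / w))) by lra.
  assert (Hz2 : z2 = - w * y2 * sin (w * s) + q2 * cos (w * s) + b * (y1 * cos (w * s) + q1 * sin (w * s) / w) /
           ((y1 * cos (w * s) + q1 * sin (w * s) / w) * (y1 * cos (w * s) + q1 * sin (w * s) / w) +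
            (y2 * cos (w * s) + q2 * sin (w * s) / w) * (y2 * cos (w * s) + q2 * sin (w * s) / w))) by lra.
  subst z1 z2.
  assert (HL' : L = (y1 * q2 - y2 * q1) * (cos (w*s) * cos (w*s) + sin (w*s) * sin (w*s))).
  { rewrite HLq. pose proof (sin2_cos2 (w*s)) as H; unfold Rsqr in H. rewrite Rplus_comm, H. ring. }
  pose proof (Xe_ne0 w y1 y2 q1 q2 s Hw HL1) as Hne.
  unfold gint, ham, vsub, Apot, nrm2, dot, Xe, Pe in *; simpl.
  rewrite HL'. field.
  split; [lra|]. intro Hz; apply Hne. apply (Rmult_eq_reg_l (w*w)); [| assert (w*w>0) by nra; lra]. rewrite Rmult_0_r, <- Hz. field. lra. }
rewrite (is_RInt_unique _ _ _ _ (is_RInt_derive (Hint b w y1 y2 q1 q2) _ 0 t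
   (fun s _ => Hint_deriv b w y1 y2 q1 q2 L s Hw HLq HL0)
   (fun s _ => gint_cont b w y1 y2 q1 q2 L s Hw HL1))).
unfold minus, plus, opp; simpl. unfold Hint.
rewrite Rmult_0_r.
replace (Xe w y1 q1 t * Pe w y1 q1 t) with (y1 * q1) by (symmetry; apply KX; auto).
replace (Xe w y2 q2 t * Pe w y2 q2 t) with (y2 * q2) by (symmetry; apply KX; auto).
replace (Xe w y1 q1 0 * Pe w y1 q1 0) with (y1 * q1) by (symmetry; unfold Xe, Pe; rewrite Rmult_0_r; apply KX; auto; apply sin_0).
replace (Xe w y2 q2 0 * Pe w y2 q2 0) with (y2 * q2) by (symmetry; unfold Xe, Pe; rewrite Rmult_0_r; apply KX; auto; apply sin_0).
assert (Hdet : y1 * (q2/w) - q1/w * y2 = L / w) by (rewrite HLq; field; lra).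
destruct (Rlt_dec 0 L) as [Hp|Hm].
- assert (Hdp : 0 < y1 * (q2/w) - q1/w * y2) by (rewrite Hdet; apply Rdiv_lt_0_compat; auto).
  pose proof (Thg_shift _ _ _ _ _ Hst Hdp). 
  replace (Thg y1 (q1 / w) y2 (q2 / w) (w * t)) with (w*t + Thg y1 (q1 / w) y2 (q2 / w) 0) by lra.
  ring.
- assert (Hdp : y1 * (q2/w) - q1/w * y2 < 0).
  { rewrite Hdet. assert (L < 0) by lra. unfold Rdiv. assert (0 < /w) by (apply Rinv_0_lt_compat; auto). nra. }
  pose proof (Thg_shift' _ _ _ _ _ Hst Hdp).
  replace (Thg y1 (q1 / w) y2 (q2 / w) (w * t)) with (- (w*t) + Thg y1 (q1 / w) y2 (q2 / w) 0) by lra.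
  ring.
Qed.
Lemma loc_sign a c x0 : a + c*x0 <> 0 -> locally x0 (fun u => 0 < (a + c*u) * (a + c*x0)).
Proof.
intros H. set (d := a + c*x0) in *.
assert (Hd : 0 < Rabs d) by (apply Rabs_pos_lt; auto).
assert (Hc : 0 <= Rabs c) by apply Rabs_pos.
assert (Hpos : 0 < Rabs d / (Rabs c + 1)) by (apply Rdiv_lt_0_compat; lra).
exists (mkposreal _ Hpos). intros u Hu.
change (Rabs (u - x0) < Rabs d / (Rabs c + 1)) in Hu.
set (k := c * (u - x0)).
assert (Hk : Rabs k < Rabs d).
{ unfold k. rewrite Rabs_mult.
  assert (Rabs c * Rabs (u - x0) <= Rabs c * (Rabs d / (Rabs c + 1))).
  { apply Rmult_le_compat_l; lra. }
  assert (Rabs c * (Rabs d / (Rabs c + 1)) < Rabs d).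
  { apply (Rmult_lt_reg_r (Rabs c + 1)); [lra|]. field_simplify; [|lra]. lra. }
  lra. }
replace (a + c*u) with (d + k) by (unfold d, k; ring).
assert (E1 : d * d = Rabs d * Rabs d) by (rewrite <- Rabs_mult; symmetry; apply Rabs_pos_eq; nra).
assert (E2 : - (k * d) <= Rabs k * Rabs d) by (rewrite <- Rabs_mult, <- Rabs_Ropp; apply Rle_abs).
assert (0 <= Rabs k) by apply Rabs_pos.
nra.
Qed.

Lemma sg_eq a b' : 0 < a * b' ->
  (if Rlt_dec 0 a then 1 else -1) = (if Rlt_dec 0 b' then 1 else -1).
Proof.
intros H. destruct (Rlt_dec 0 a), (Rlt_dec 0 b'); auto.
- exfalso. assert (b' <= 0) by lra. nra.
- exfalso. assert (a <= 0) by lra. nra.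
Qed.

Lemma im_formula b w BB Fl t x y e : 0 < w -> is_ham_flow b w Fl -> admissible b y e ->
  snd (phase b w BB Fl t x y e) =
  BB * ((fst x - (fst y * cos (w*t) + (fst e - fst (Apot b y)) * sin (w*t) / w))^2
      + (snd x - (snd y * cos (w*t) + (snd e - snd (Apot b y)) * sin (w*t) / w))^2) / 2.
Proof.
intros Hw HF Ha.
destruct (flow_explicit b w Fl y e Hw HF Ha t) as (E1 & E2 & _ & _).
unfold phase. simpl. unfold nrm2, dot, vsub. simpl. rewrite E1, E2.
unfold vsub, Apot, nrm2, dot. simpl.
destruct y as [y1 y2]. pose proof Ha as [Hy0 _]. simpl.
assert (Hn : y1*y1+y2*y2 <> 0).
{ intros H. apply Hy0. assert (y1 = 0) by nra. assert (y2 = 0) by nra. subst; reflexivity. }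
field. split; lra.
Qed.

Lemma cos_pm th : sin th = 0 -> cos th = 1 \/ cos th = -1.
Proof.
intros Hs. pose proof (sin2_cos2 th) as H. rewrite Hs in H. unfold Rsqr in H.
assert ((cos th - 1) * (cos th + 1) = 0) by nra.
apply Rmult_integral in H0. destruct H0; [left|right]; lra.
Qed.

Lemma sub_eq z a c : z - a = c -> z = c + a.
Proof. intros; lra. Qed.

Lemma re_formula b w BB Fl t x y e : 0 < w -> is_ham_flow b w Fl -> admissible b y e -> sin (w*t) = 0 ->
  fst (phase b w BB Fl t x y e) =
  b * (w*t) * (if Rlt_dec 0 (wedge y e - b) then 1 else -1)
  + (fst x - cos (w*t) * fst y) * (cos (w*t) * fst e)
  + (snd x - cos (w*t) * snd y) * (cos (w*t) * snd e).
Proof.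
intros Hw HF Ha Hst.
pose proof (flow_explicit b w Fl y e Hw HF Ha t) as (E1 & E2 & E3 & E4).
unfold phase. simpl. rewrite (action_val b w Fl t y e Hw HF Ha Hst).
rewrite Rplus_assoc. f_equal.
destruct y as [y1 y2], e as [e1 e2], x as [x1 x2].
pose proof Ha as [Hy0 _].
assert (Hn : y1*y1+y2*y2 <> 0).
{ intros H. apply Hy0. assert (y1 = 0) by nra. assert (y2 = 0) by nra. subst; reflexivity. }
remember (Fl t (y1, y2) (e1, e2)) as F eqn:HeqF. clear HeqF.
destruct F as [[a1 a2] [z1 z2]].
unfold vsub, Apot, nrm2, dot in *; simpl in *.
rewrite Hst in *.
subst a1 a2.
apply sub_eq in E3. apply sub_eq in E4. subst z1 z2.
destruct (cos_pm _ Hst) as [Hc|Hc]; rewrite Hc in *; field; split; auto; lra.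
Qed.
Lemma proj1C (f : R -> C) x : is_derive (K := R_AbsRing) (V := C_R_NormedModule) f x (0 : C) ->
  is_derive (fun u => fst (f u)) x 0 /\ is_derive (fun u => snd (f u)) x 0.
Proof.
intros H. unfold is_derive in *. split.
- eapply filterdiff_ext_lin.
  apply (filterdiff_comp' (U:=R_NormedModule) (V:=prod_NormedModule R_AbsRing R_NormedModule R_NormedModule) f fst x _ fst H).
  apply filterdiff_linear, is_linear_fst.
  intros y; simpl. unfold scal; simpl. unfold prod_scal, mult; simpl. unfold mult; simpl. ring.
- eapply filterdiff_ext_lin.
  apply (filterdiff_comp' (U:=R_NormedModule) (V:=prod_NormedModule R_AbsRing R_NormedModule R_NormedModule) f snd x _ snd H).
  apply filterdiff_linear, is_linear_snd.
  intros y; simpl. unfold scal; simpl. unfold prod_scal, mult; simpl. unfold mult; simpl. ring.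
Qed.

Lemma deriv_zero_unique (f : R -> R) x v : is_derive f x 0 -> is_derive f x v -> v = 0.
Proof. intros H1 H2. rewrite <- (is_derive_unique _ _ _ H2). apply is_derive_unique; auto. Qed.

Theorem proposition3p4 (b w BB t : R)
    (Fl : R -> R * R -> R * R -> (R * R) * (R * R)) :
  0 < w -> 0 < BB -> 0 <= t ->
  is_ham_flow b w Fl ->
  forall x y eta : R * R,
    admissible b y eta ->
    phase_eta_zero b w BB Fl t x y eta ->
    wedge x y = - (sin (w * t) / w) * (wedge y eta - b).
Proof.
intros Hw HB Ht HF x y e Ha Hph.
destruct Hph as [Hd1 Hd2].
apply proj1C in Hd1. destruct Hd1 as [Re1 Im1].
apply proj1C in Hd2. destruct Hd2 as [Re2 Im2].
destruct x as [x1 x2], y as [y1 y2], e as [e1 e2]. simpl in *.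
pose proof Ha as [Hy0 HLb].
unfold wedge in HLb; simpl in HLb.
assert (Hn : y1*y1+y2*y2 <> 0).
{ intros H. apply Hy0. assert (y1 = 0) by nra. assert (y2 = 0) by nra. subst; reflexivity. }
assert (N1 : locally e1 (fun u => 0 < ((y1*e2 - b) + (-y2)*u) * ((y1*e2 - b) + (-y2)*e1)))
  by (apply loc_sign; lra).
assert (N2 : locally e2 (fun u => 0 < ((-y2*e1 - b) + y1*u) * ((-y2*e1 - b) + y1*e2)))
  by (apply loc_sign; lra).
assert (A1 : forall u, 0 < ((y1*e2 - b) + (-y2)*u) * ((y1*e2 - b) + (-y2)*e1) -> admissible b (y1,y2) (u,e2)).
{ intros u Hu. split; auto. unfold wedge; simpl. intro H.
  replace (y1 * e2 - b + - y2 * u) with (y1 * e2 - y2 * u - b) in Hu by ring. rewrite H in Hu. lra. }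
assert (A2 : forall u, 0 < ((-y2*e1 - b) + y1*u) * ((-y2*e1 - b) + y1*e2) -> admissible b (y1,y2) (e1,u)).
{ intros u Hu. split; auto. unfold wedge; simpl. intro H.
  replace (- y2 * e1 - b + y1 * u) with (y1 * u - y2 * e1 - b) in Hu by ring. rewrite H in Hu. lra. }
destruct (Req_dec (sin (w*t)) 0) as [Hs|Hs].
- set (C := cos (w*t)).
  set (sg := if Rlt_dec 0 (wedge (y1,y2) (e1,e2) - b) then 1 else -1).
  assert (L1 : locally e1 (fun u => fst (phase b w BB Fl t (x1,x2) (y1,y2) (u,e2)) =
     b*(w*t)*sg + (x1 - C*y1)*(C*u) + (x2 - C*y2)*(C*e2))).
  { apply (filter_imp _ _ (fun u Hu => Hu)) in N1. revert N1. apply filter_imp. intros u Hu.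
    rewrite re_formula; auto. simpl. unfold sg, C. f_equal. f_equal. f_equal.
    apply sg_eq. unfold wedge; simpl.
    replace (y1 * e2 - y2 * u - b) with (y1 * e2 - b + - y2 * u) by ring.
    replace (y1 * e2 - y2 * e1 - b) with (y1 * e2 - b + - y2 * e1) by ring. exact Hu. }
  assert (L2 : locally e2 (fun u => fst (phase b w BB Fl t (x1,x2) (y1,y2) (e1,u)) =
     b*(w*t)*sg + (x1 - C*y1)*(C*e1) + (x2 - C*y2)*(C*u))).
  { revert N2. apply filter_imp. intros u Hu.
    rewrite re_formula; auto. simpl. unfold sg, C. f_equal. f_equal. f_equal.
    apply sg_eq. unfold wedge; simpl.
    replace (y1 * u - y2 * e1 - b) with (- y2 * e1 - b + y1 * u) by ring.
    replace (y1 * e2 - y2 * e1 - b) with (- y2 * e1 - b + y1 * e2) by ring. exact Hu. }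
  pose proof (is_derive_ext_loc _ _ _ _ L1 Re1) as H1.
  pose proof (is_derive_ext_loc _ _ _ _ L2 Re2) as H2.
  assert (H1' : is_derive (fun u => b*(w*t)*sg + (x1 - C*y1)*(C*u) + (x2 - C*y2)*(C*e2)) e1 ((x1 - C*y1)*C))
    by (auto_derive; auto; ring).
  assert (H2' : is_derive (fun u => b*(w*t)*sg + (x1 - C*y1)*(C*e1) + (x2 - C*y2)*(C*u)) e2 ((x2 - C*y2)*C))
    by (auto_derive; auto; ring).
  pose proof (deriv_zero_unique _ _ _ H1 H1') as Z1.
  pose proof (deriv_zero_unique _ _ _ H2 H2') as Z2.
  assert (HC : C = 1 \/ C = -1) by (apply cos_pm; auto).
  clearbody C sg.
  assert (X1 : x1 = C*y1) by (destruct HC as [HC|HC]; rewrite HC in *; lra).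
  assert (X2 : x2 = C*y2) by (destruct HC as [HC|HC]; rewrite HC in *; lra).
  unfold wedge; simpl. rewrite Hs, X1, X2. unfold Rdiv. ring.
- set (C := cos (w*t)). set (S := sin (w*t)).
  set (a1 := fst (Apot b (y1,y2))). set (a2 := snd (Apot b (y1,y2))).
  assert (L1 : locally e1 (fun u => snd (phase b w BB Fl t (x1,x2) (y1,y2) (u,e2)) =
     BB * ((x1 - (y1 * C + (u - a1) * S / w))^2 + (x2 - (y2 * C + (e2 - a2) * S / w))^2) / 2)).
  { revert N1. apply filter_imp. intros u Hu. rewrite im_formula; auto. }
  assert (L2 : locally e2 (fun u => snd (phase b w BB Fl t (x1,x2) (y1,y2) (e1,u)) =
     BB * ((x1 - (y1 * C + (e1 - a1) * S / w))^2 + (x2 - (y2 * C + (u - a2) * S / w))^2) / 2)).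
  { revert N2. apply filter_imp. intros u Hu. rewrite im_formula; auto. }
  pose proof (is_derive_ext_loc _ _ _ _ L1 Im1) as H1.
  pose proof (is_derive_ext_loc _ _ _ _ L2 Im2) as H2.
  assert (H1' : is_derive (fun u => BB * ((x1 - (y1 * C + (u - a1) * S / w))^2 + (x2 - (y2 * C + (e2 - a2) * S / w))^2) / 2) e1
     (- BB * S / w * (x1 - (y1 * C + (e1 - a1) * S / w)))).
  { auto_derive; auto. field. lra. }
  assert (H2' : is_derive (fun u => BB * ((x1 - (y1 * C + (e1 - a1) * S / w))^2 + (x2 - (y2 * C + (u - a2) * S / w))^2) / 2) e2
     (- BB * S / w * (x2 - (y2 * C + (e2 - a2) * S / w)))).
  { auto_derive; auto. field. lra. }
  pose proof (deriv_zero_unique _ _ _ H1 H1') as Z1.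
  pose proof (deriv_zero_unique _ _ _ H2 H2') as Z2.
  assert (HK : - BB * S / w <> 0).
  { unfold Rdiv. intro H. apply Rmult_integral in H. destruct H as [H|H].
    - apply Rmult_integral in H. destruct H; [lra|auto].
    - apply Rinv_neq_0_compat in H; auto; lra. }
  assert (ES : sin (w*t) = S) by reflexivity.
  assert (Ea1 : a1 = - b * y2 / (y1*y1+y2*y2)) by reflexivity.
  assert (Ea2 : a2 = b * y1 / (y1*y1+y2*y2)) by reflexivity.
  clearbody C S a1 a2.
  apply Rmult_integral in Z1. destruct Z1 as [Z1|Z1]; [tauto|].
  apply Rmult_integral in Z2. destruct Z2 as [Z2|Z2]; [tauto|].
  assert (X1 : x1 = y1 * C + (e1 - a1) * S / w) by lra.
  assert (X2 : x2 = y2 * C + (e2 - a2) * S / w) by lra.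
  unfold wedge; simpl. rewrite ?ES, X1, X2, Ea1, Ea2. field. split; lra.
Qed.
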